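(* Let $R$ be an excellent normal two-dimensional local ring, $\phi:X\to\operatorname{Spec}(R)$ a resolution of singularities, and $D_1\le D_2$ effective divisors on $X$ with exceptional support, with respective anti-nef parts of their Zariski decompositions $\Delta_1$ and $\Delta_2$. Then $(\Delta_2^2)\le(\Delta_1^2)$, with equality if and only if $\Delta_1=\Delta_2$.
   Context: The intersection form on exceptional curves of $X$ is negative definite. A $\mathbb Q$-divisor $C$ with exceptional support is anti-nef if $(C\cdot E)\le0$ for all exceptional curves $E$. For an effective divisor $D$ with exceptional support, the anti-nef part $\Delta$ of its Zariski decomposition is the unique minimal effective anti-nef $\mathbb Q$-divisor with exceptional support such that $D\le\Delta$. *)

(* Defs.v *)
(* Exceptional curves E_0..E_{n-1} of the resolution X -> Spec R
   are indexed by 'I_n; M i j = (E_i . E_j) is the (integer) intersection matrix.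
   A (Q-)divisor with exceptional support is its coefficient vector. *)
From HB Require Import structures.
From mathcomp Require Import all_boot all_order all_algebra.
Set Implicit Arguments. Unset Strict Implicit. Unset Printing Implicit Defensive.
Import Order.TTheory GRing.Theory Num.Theory.
Local Open Scope ring_scope.

Definition qdiv (n : nat) := {ffun 'I_n -> rat}.

Definition qdiv_of_int (n : nat) (D : {ffun 'I_n -> int}) : qdiv n :=
  [ffun i => (D i)%:~R].

Definition inter (n : nat) (M : 'M[int]_n) (x y : qdiv n) : rat :=
  \sum_(i < n) \sum_(j < n) x i * (M i j)%:~R * y j.

Definition exc_intersection_matrix (n : nat) (M : 'M[int]_n) : Prop :=
  (forall i j, M i j = M j i) /\
  (forall i j, i != j -> 0 <= M i j) /\
  (forall x : qdiv n, x != 0 -> inter M x x < 0).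

Definition effective (n : nat) (x : qdiv n) : Prop := forall i, 0 <= x i.

Definition qle (n : nat) (x y : qdiv n) : Prop := forall i, x i <= y i.

Definition anti_nef (n : nat) (M : 'M[int]_n) (C : qdiv n) : Prop :=
  forall i, inter M C [ffun j => if j == i then 1 else 0] <= 0.

Definition effective_antinef_above (n : nat) (M : 'M[int]_n) (D : qdiv n)
  (C : qdiv n) : Prop :=
  effective C /\ anti_nef M C /\ qle D C.

(* Delta is the unique minimal effective anti-nef Q-divisor with D <= Delta *)
Definition antinef_part (n : nat) (M : 'M[int]_n) (D : {ffun 'I_n -> int})
  (Delta : qdiv n) : Prop :=
  effective_antinef_above M (qdiv_of_int D) Delta /\
  (forall C, effective_antinef_above M (qdiv_of_int D) C ->
     qle C Delta -> C = Delta) /\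
  (forall C, effective_antinef_above M (qdiv_of_int D) C ->
     (forall C', effective_antinef_above M (qdiv_of_int D) C' -> qle C' C -> C' = C) ->
     C = Delta).

(* Main.v *)
Require Import Defs.
From mathcomp Require Import all_boot all_order all_algebra.
From mathcomp.algebra_tactics Require Import ring lra.
Import Order.TTheory GRing.Theory Num.Theory.
Local Open Scope ring_scope.

Ltac rring := match goal with |- ?a = ?b => change (a = b :> rat) end; ring.

Section Aux.
Variable n : nat.
Variable M : 'M[int]_n.
Hypothesis hs : forall i j, M i j = M j i.
Hypothesis hoff : forall i j, i != j -> 0 <= M i j.

Definition ee (k : 'I_n) : qdiv n := [ffun j => if j == k then 1 else 0].

Lemma inter_sym x y : inter M x y = inter M y x.
Proof.
rewrite /inter exchange_big; apply eq_bigr => i _; apply eq_bigr => j _.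
by rewrite (hs i j) mulrC (mulrC (x j)) mulrA.
Qed.

Lemma inter_addl (x z w : qdiv n) :
  inter M [ffun i => x i + z i] w = inter M x w + inter M z w.
Proof.
rewrite /inter -big_split; apply eq_bigr => i _; rewrite -big_split.
apply eq_bigr => j _; by rewrite ffunE !mulrDl.
Qed.

Lemma inter_e x k : inter M x (ee k) = \sum_i x i * (M i k)%:~R.
Proof.
rewrite /inter; apply eq_bigr => i _; rewrite (bigD1 k) //= big1 ?addr0.
  by rewrite ffunE eqxx mulr1.
by move=> j /negbTE hj; rewrite ffunE hj mulr0.
Qed.

Lemma inter_as x y : inter M x y = \sum_j y j * inter M x (ee j).
Proof.
rewrite {1}/inter exchange_big; apply eq_bigr => j _.
rewrite inter_e mulr_sumr; apply eq_bigr => i _; by rewrite mulrC.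
Qed.

Lemma antinef_le x y : anti_nef M x -> effective y -> inter M x y <= 0.
Proof.
move=> hx hy; rewrite inter_as; apply: sumr_le0 => j _.
apply: mulr_ge0_le0; first exact: hy.
exact: hx.
Qed.

Lemma le_at (C A : qdiv n) i : C i = A i -> (forall j, C j <= A j) ->
  inter M C (ee i) <= inter M A (ee i).
Proof.
move=> hi hj; rewrite !inter_e; apply: ler_sum => j _.
case: (eqVneq j i) => [->|nji]; first by rewrite hi.
apply: ler_wpM2r; last exact: hj.
by rewrite ler0z; apply: hoff.
Qed.

Lemma inter_sq (x z : qdiv n) : inter M [ffun i => x i + z i] [ffun i => x i + z i]
  = inter M x x + 2 * inter M x z + inter M z z.
Proof.
rewrite inter_addl (inter_sym x) (inter_sym z) !inter_addl (inter_sym z x); rring.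
Qed.

End Aux.

Theorem corollary5p3 (n : nat) (M : 'M[int]_n)
  (D1 D2 : {ffun 'I_n -> int}) (Delta1 Delta2 : qdiv n) :
  exc_intersection_matrix M ->
  (forall i, 0 <= D1 i) -> (forall i, 0 <= D2 i) ->
  (forall i, D1 i <= D2 i) ->
  antinef_part M D1 Delta1 -> antinef_part M D2 Delta2 ->
  inter M Delta2 Delta2 <= inter M Delta1 Delta1 /\
  (inter M Delta2 Delta2 = inter M Delta1 Delta1 <-> Delta1 = Delta2).
Proof.
move=> [hs [hoff hneg]] h1 h2 h12 [[e1 [a1 q1]] [m1 _]] [[e2 [a2 q2]] _].
pose C : qdiv n := [ffun i => Num.min (Delta1 i) (Delta2 i)].
have CD1 : qle C Delta1 by move=> i; rewrite ffunE ge_min lexx.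
have CD2 : qle C Delta2 by move=> i; rewrite ffunE ge_min lexx orbT.
have hC : effective_antinef_above M (qdiv_of_int D1) C.
  split; first by move=> i; rewrite ffunE le_min e1 e2.
  split.
    move=> i.
    have : C i = Delta1 i \/ C i = Delta2 i.
      by rewrite ffunE; case: leP; [left|right].
    case=> hi.
      apply: le_trans (a1 i); rewrite -!/(ee i); exact: le_at.
    apply: le_trans (a2 i); rewrite -!/(ee i); exact: le_at.
  move=> i; rewrite !ffunE le_min; apply/andP; split; first by have := q1 i; rewrite ffunE.
  apply: le_trans (q2 i); rewrite ffunE ler_int; exact: h12.
have hCeq := m1 C hC CD1.
have le12 : forall i, Delta1 i <= Delta2 i.
  by move=> i; rewrite -hCeq; exact: CD2.
pose F : qdiv n := [ffun i => Delta2 i - Delta1 i].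
have hF : effective F by move=> i; rewrite ffunE subr_ge0.
have eD2 : Delta2 = [ffun i => Delta1 i + F i].
  by apply/ffunP => i; rewrite !ffunE addrC subrK.
have key : inter M Delta2 Delta2 =
  inter M Delta1 Delta1 + 2 * inter M Delta1 F + inter M F F.
  by rewrite {1 2}eD2 inter_sq.
have ha : inter M Delta1 F <= 0 by apply: antinef_le.
have hb : inter M F F <= 0.
  case: (eqVneq F 0) => [->|nz]; last exact: ltW (hneg _ nz).
  rewrite /inter big1 // => i _; rewrite big1 // => j _; by rewrite (_ : (0 : qdiv n) i = 0) ?mul0r // ffunE.
split; first by rewrite key; lra.
split; last by move=> ->.
rewrite key => heq.
have hb0 : inter M F F = 0 by lra.
case: (eqVneq F 0) => [F0|nz]; last by have := hneg _ nz; rewrite hb0 ltxx.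
apply/ffunP => i; have := congr1 (fun f : qdiv n => f i) F0.
rewrite /= !ffunE => /eqP; rewrite subr_eq0 => /eqP -> //.
Qed.
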